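(* Let $0\le a,c,\varphi\in L^1(\mathbb R^d)$ and define, for $x\in\mathbb R^d$ and $\eta\in\Gamma_G$, $$b(x,\eta)=\sum_{y\in\eta}a(x-y)\Bigl(1+\sum_{z\in\eta\setminus\{y\}}c(z-y)\Bigr)\exp\Bigl(-\sum_{z\in\eta\setminus\{y\}}\varphi(z-y)\Bigr).$$ Suppose that there exists $B\ge1$ with $a(x)\le BG(x)$ and $\varphi(x)\le BG(x)$ for a.a. $x\in\mathbb R^d$; that $\varphi$ is separated from $0$ in a neighbourhood of the origin (there exist $\alpha,\rho>0$ with $\varphi(x)\ge\alpha$ for a.a. $|x|\le\rho$); and that there exists $p\ge0$ with $c(x)\le p\varphi(x)$ for a.a. $x$. Then $$\sup_{x\in\mathbb R^d,\ \eta\in\Gamma_G} b(x,\eta)<\infty.$$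
   Context: Fix $d\in\mathbb N$ and $\varepsilon>0$, and let $G(x)=(1+|x|)^{-d-\varepsilon}$. $\Gamma$ is the set of locally finite subsets $\gamma\subset\mathbb R^d$ (i.e. $|\gamma\cap B|<\infty$ for each bounded Borel $B$), and $\Gamma_G=\{\gamma\in\Gamma:\sum_{x\in\gamma}G(x)<\infty\}$ (tempered configurations).
   Formalization: The bounds 0 ≤ a, c, φ, a ≤ BG, φ ≤ BG, φ ≥ α for |x| ≤ ρ, and c ≤ pφ hold for every x ∈ ℝᵈ rather than for almost all x. The statement above fails without it. *)

(* Defs.v *)
From Stdlib Require Import Reals Lra List ClassicalEpsilon.
Import ListNotations.
Open Scope R_scope.

(* Points of R^d are represented as functions nat -> R vanishing at indices >= d. *)
Definition point := nat -> R.
Definition in_Rd (d : nat) (x : point) : Prop := forall i, (d <= i)%nat -> x i = 0.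
Definition psub (x y : point) : point := fun i => x i - y i.
Definition norm (d : nat) (x : point) : R :=
  sqrt (fold_right Rplus 0 (map (fun i => x i ^ 2) (seq 0 d))).

Definition Gfun (d : nat) (eps : R) (x : point) : R :=
  Rpower (1 + norm d x) (- (INR d + eps)).

Definition sum_list (l : list R) : R := fold_right Rplus 0 l.

Definition finite_sums (S : point -> Prop) (f : point -> R) (s : R) : Prop :=
  exists l : list point, NoDup l /\ (forall y, In y l -> S y) /\ s = sum_list (map f l).

(* all finite partial sums of f over S are <= M  (for f >= 0: sum_{x in S} f x <= M) *)
Definition sum_le (S : point -> Prop) (f : point -> R) (M : R) : Prop :=
  forall l : list point, NoDup l -> (forall y, In y l -> S y) -> sum_list (map f l) <= M.

(* sum_{x in S} f x for nonnegative f: the supremum of the finite partial sums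
   (meaningful whenever these are bounded) *)
Definition set_sum (S : point -> Prop) (f : point -> R) : R :=
  epsilon (inhabits 0) (fun s => is_lub (finite_sums S f) s).

Definition configuration (d : nat) (g : point -> Prop) : Prop :=
  (forall x, g x -> in_Rd d x) /\
  (forall r : R, exists l : list point, forall x, g x -> norm d x <= r -> In x l).

Definition tempered (d : nat) (eps : R) (g : point -> Prop) : Prop :=
  configuration d g /\ exists M, sum_le g (Gfun d eps) M.

Definition b_term (a c phi : point -> R) (eta : point -> Prop) (x y : point) : R :=
  a (psub x y)
  * (1 + set_sum (fun z => eta z /\ z <> y) (fun z => c (psub z y)))
  * exp (- set_sum (fun z => eta z /\ z <> y) (fun z => phi (psub z y))).

(* Main.v *)
Require Import Defs.
From Stdlib Require Import Reals Lra Lia List ClassicalEpsilon ZArith.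
Import ListNotations.
Open Scope R_scope.

Lemma expl x y : x <= y -> exp x <= exp y.
Proof. intros [H|H]; [left; apply exp_increasing; auto| subst; lra]. Qed.

Lemma lnl x y : 0 < x -> x <= y -> ln x <= ln y.
Proof. intros Hx [H|H]; [left; apply ln_increasing; auto| subst; lra]. Qed.

Lemma exp_pos' x : 0 <= exp x. Proof. left; apply exp_pos. Qed.

Lemma sl_app l1 l2 : sum_list (l1 ++ l2) = sum_list l1 + sum_list l2.
Proof. induction l1; simpl; [lra| rewrite IHl1; lra]. Qed.

Lemma sl_le {A} (f g : A -> R) l :
  (forall x, In x l -> f x <= g x) -> sum_list (map f l) <= sum_list (map g l).
Proof. induction l; simpl; intros H; [lra|].
  pose proof (H a (or_introl eq_refl)). pose proof (IHl (fun x h => H x (or_intror h))). lra. Qed.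

Lemma sl_nn {A} (f : A -> R) l :
  (forall x, In x l -> 0 <= f x) -> 0 <= sum_list (map f l).
Proof. induction l; simpl; intros H; [lra|].
  pose proof (H a (or_introl eq_refl)). pose proof (IHl (fun x h => H x (or_intror h))). lra. Qed.

Lemma sl_scal {A} (f : A -> R) c l :
  sum_list (map (fun x => c * f x) l) = c * sum_list (map f l).
Proof. induction l; simpl; [lra| rewrite IHl; lra]. Qed.

Lemma sl_plus {A} (f g : A -> R) l :
  sum_list (map (fun x => f x + g x) l) = sum_list (map f l) + sum_list (map g l).
Proof. induction l; simpl; [lra| rewrite IHl; lra]. Qed.

Lemma sl_const {A} (c : R) (l : list A) :
  sum_list (map (fun _ => c) l) = INR (length l) * c.
Proof. induction l; simpl length; [simpl; lra|]. rewrite S_INR. simpl. rewrite IHl. lra. Qed.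

Lemma sl_ext {A} (f g : A -> R) l :
  (forall x, In x l -> f x = g x) -> sum_list (map f l) = sum_list (map g l).
Proof. intros H; f_equal; apply map_ext_in; auto. Qed.

Lemma sl_incl {A} (f : A -> R) (l l' : list A) :
  NoDup l -> incl l l' -> (forall x, In x l' -> 0 <= f x) ->
  sum_list (map f l) <= sum_list (map f l').
Proof.
  revert l. induction l' as [|a l' IH]; intros l Hn Hi Hf.
  - destruct l as [|b l]; [simpl; lra|]. exfalso; apply (Hi b); simpl; auto.
  - simpl. destruct (excluded_middle_informative (In a l)) as [Ha|Ha].
    + destruct (in_split _ _ Ha) as (l1 & l2 & ->).
      rewrite map_app, sl_app. simpl.
      assert (sum_list (map f (l1 ++ l2)) <= sum_list (map f l')).
      { apply IH. eapply NoDup_remove_1; eauto.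
        intros x Hx. pose proof (NoDup_remove_2 _ _ _ Hn) as Hn2.
        assert (In x (a :: l')) as Hx'. { apply Hi. apply in_app_or in Hx; apply in_or_app; simpl; tauto. }
        destruct Hx' as [<-|]; [contradiction|auto].
        intros; apply Hf; simpl; auto. }
      rewrite map_app, sl_app in H. lra.
    + assert (sum_list (map f l) <= sum_list (map f l')).
      { apply IH; auto. intros x Hx. destruct (Hi x Hx) as [<-|]; [contradiction|auto].
        intros; apply Hf; simpl; auto. }
      pose proof (Hf a (or_introl eq_refl)). lra.
Qed.

Section Group.
Context {A K : Type} (kdec : forall x y : K, {x = y} + {x <> y}) (key : A -> K).

Definition grp (l : list A) (k : K) := filter (fun y => if kdec (key y) k then true else false) l.

Lemma sum_indic (Ks : list K) k0 c : NoDup Ks -> In k0 Ks ->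
  sum_list (map (fun k => if kdec k0 k then c else 0) Ks) = c.
Proof.
  induction Ks as [|k Ks IH]; intros Hn Hi; [destruct Hi|].
  inversion Hn; subst. simpl. destruct (kdec k0 k) as [->|Hne].
  - rewrite (sl_ext _ (fun _ => 0)). rewrite sl_const; lra.
    intros x Hx. destruct (kdec k x); [subst; contradiction|auto].
  - destruct Hi as [->|Hi]; [congruence|]. rewrite IH; auto; lra.
Qed.

Lemma sum_group (g : A -> R) (Ks : list K) l : NoDup Ks -> (forall y, In y l -> In (key y) Ks) ->
  sum_list (map g l) = sum_list (map (fun k => sum_list (map g (grp l k))) Ks).
Proof.
  intros Hn. induction l as [|a l IH]; intros Hi.
  - rewrite (sl_ext _ (fun _ => 0) Ks); [rewrite sl_const; simpl; lra|auto].
  - rewrite (sl_ext _ (fun k => (if kdec (key a) k then g a else 0) + sum_list (map g (grp l k)))).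
    + rewrite sl_plus, sum_indic; auto.
      * rewrite <- IH; [simpl; lra|]. intros; apply Hi; simpl; auto.
      * apply Hi; simpl; auto.
    + intros k _. unfold grp. simpl. destruct (kdec (key a) k); simpl; lra.
Qed.

Lemma grp_in l k y : In y (grp l k) -> In y l /\ key y = k.
Proof. unfold grp; rewrite filter_In. intros [H1 H2]. destruct (kdec (key y) k); [auto|discriminate]. Qed.

Lemma grp_nodup l k : NoDup l -> NoDup (grp l k).
Proof. intros; apply NoDup_filter; auto. Qed.

Lemma grp_self l y : In y l -> In y (grp l (key y)).
Proof. intros; unfold grp; rewrite filter_In; split; auto. destruct (kdec (key y) (key y)); congruence. Qed.
End Group.

Lemma ln_le_m1 x : 0 < x -> ln x <= x - 1.
Proof. intros Hx. pose proof (exp_ineq1_le (ln x)). rewrite exp_ln in H; lra. Qed.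

Section OneD.
Variable s : R.
Hypothesis Hs : 1 < s.
Let r := s - 1.

Definition hn (m : nat) := exp (- s * ln (INR m + 1)).
Definition Tn (m : nat) := exp (- r * ln (INR m + 1)) / r.

Lemma tele_step (N : nat) : hn (S N) <= Tn N - Tn (S N).
Proof.
  unfold hn, Tn. rewrite S_INR. set (x := INR N + 1). assert (Hx : 1 <= x) by (unfold x; pose proof (pos_INR N); lra).
  set (y := x + 1). assert (Hr : 0 < r) by (unfold r; lra).
  assert (Hl : ln y - ln x >= 1 / y).
  { assert (ln (x / y) <= x / y - 1) by (apply ln_le_m1; unfold y; apply Rdiv_lt_0_compat; lra).
    unfold Rdiv in H. rewrite ln_mult, ln_Rinv in H; try (unfold y; lra); try (apply Rinv_0_lt_compat; unfold y; lra).
    assert (x * / y - 1 = - (1 / y)) by (unfold y; field; lra). lra. }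
  assert (E : exp (- r * ln x) = exp (- r * ln y) * exp (r * (ln y - ln x))) by (rewrite <- exp_plus; f_equal; ring).
  pose proof (exp_ineq1_le (r * (ln y - ln x))).
  assert (exp (- r * ln y) * (1 + r * (1 / y)) <= exp (-r * ln x)).
  { rewrite E. apply Rmult_le_compat_l; [apply exp_pos'|]. assert (r * (ln y - ln x) >= r * (1/y)) by (apply Rmult_ge_compat_l; lra). lra. }
  assert (exp (- s * ln y) = exp (- r * ln y) * (1 / y)).
  { replace (- s * ln y) with (- r * ln y + - ln y) by (unfold r; ring). rewrite exp_plus, exp_Ropp, exp_ln by (unfold y; lra). field. unfold y; lra. }
  rewrite H1. apply (Rmult_le_reg_l r); auto. unfold Rdiv. 
  assert (0 < exp (- r * ln y)) by apply exp_pos.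
  replace (r * ((exp (- r * ln x) * / r) - (exp (- r * ln y) * / r))) with (exp (- r * ln x) - exp (- r * ln y)) by (field; lra).
  nra.
Qed.

Lemma tele (N : nat) : sum_list (map hn (seq 0 (S N))) <= 1 + 1 / r - Tn N.
Proof.
  assert (Hr : 0 < r) by (unfold r; lra).
  induction N.
  - simpl. unfold hn, Tn. simpl. replace (0 + 1) with 1 by ring. rewrite ln_1.
    replace (- s * 0) with 0 by ring. replace (- r * 0) with 0 by ring. rewrite exp_0. lra.
  - rewrite seq_S, map_app, sl_app. simpl. pose proof (tele_step N). simpl in IHN. lra.
Qed.

Lemma hn_pos m : 0 <= hn m. Proof. apply exp_pos'. Qed.

Lemma nat_sum (L : list nat) : NoDup L -> sum_list (map hn L) <= 1 + 1 / r.
Proof.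
  intros Hn. assert (Hr : 0 < r) by (unfold r; lra).
  assert (sum_list (map hn L) <= sum_list (map hn (seq 0 (S (list_max L))))).
  { apply sl_incl; auto. 2: intros; apply hn_pos.
    intros m Hm. apply in_seq. split; [lia|].
    assert (m <= list_max L)%nat; [|lia].
    pose proof (proj1 (list_max_le L (list_max L)) (le_n _)). rewrite Forall_forall in H. auto. }
  pose proof (tele (list_max L)). assert (0 <= Tn (list_max L)).
  { unfold Tn. apply Rmult_le_pos; [apply exp_pos'|]. left; apply Rinv_0_lt_compat; auto. }
  lra.
Qed.

Definition gZ (t : R) (k : Z) := exp (- s * ln (1 + Rabs (t - IZR k))).

Definition c2 := exp (s * ln 2).

Lemma sum_filter {A} (f : A -> R) (p : A -> bool) l :
  sum_list (map f l) = sum_list (map f (filter p l)) + sum_list (map f (filter (fun x => negb (p x)) l)).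
Proof. induction l; simpl; [lra|]. destruct (p a); simpl; rewrite IHl; lra. Qed.

Lemma gZ_bound t n0 k : IZR n0 <= t < IZR n0 + 1 ->
  gZ t k <= c2 * hn (Z.to_nat (Z.abs (k - n0))).
Proof.
  intros Ht. unfold gZ, c2, hn.
  rewrite INR_IZR_INZ, Z2Nat.id by lia. rewrite abs_IZR, minus_IZR.
  set (u := Rabs (IZR k - IZR n0)).
  assert (Hu : 0 <= u) by apply Rabs_pos.
  assert (Hb : (u + 1) / 2 <= 1 + Rabs (t - IZR k)).
  { unfold u. destruct (Rle_dec (IZR k) (IZR n0)).
    - rewrite Rabs_left1 by lra. rewrite Rabs_right by lra. lra.
    - assert (IZR n0 + 1 <= IZR k). { apply Rnot_le_lt in n. apply lt_IZR in n.
        assert (IZR (n0+1) <= IZR k) by (apply IZR_le; lia). rewrite plus_IZR in H. exact H. }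
      rewrite Rabs_right by lra. rewrite Rabs_left1 by lra. lra. }
  rewrite <- exp_plus. apply expl.
  assert (ln ((u+1)/2) <= ln (1 + Rabs (t - IZR k))) by (apply lnl; [lra|auto]).
  unfold Rdiv in H. rewrite ln_mult, ln_Rinv in H by lra. nra.
Qed.

Lemma Z_sum (t : R) (L : list Z) : NoDup L -> sum_list (map (gZ t) L) <= 2 * (c2 * (1 + 1 / r)).
Proof.
  intros Hn. set (n0 := (up t - 1)%Z).
  assert (Ht : IZR n0 <= t < IZR n0 + 1).
  { destruct (archimed t). unfold n0. rewrite minus_IZR. simpl. lra. }
  assert (Hc2 : 0 <= c2) by apply exp_pos'.
  rewrite (sum_filter _ (fun k => Z.leb n0 k)).
  assert (Hr : 0 < r) by (unfold r; lra).
  assert (forall L', NoDup L' -> (forall a b, In a L' -> In b L' -> Z.to_nat (Z.abs (a - n0)) = Z.to_nat (Z.abs (b - n0)) -> a = b) ->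
     sum_list (map (gZ t) L') <= c2 * (1 + 1 / r)).
  { intros L' HL' Hinj.
    apply Rle_trans with (sum_list (map (fun k => c2 * hn (Z.to_nat (Z.abs (k - n0)))) L')).
    - apply sl_le; intros; apply gZ_bound; auto.
    - rewrite sl_scal. apply Rmult_le_compat_l; auto. rewrite <- (map_map (fun k => Z.to_nat (Z.abs (k - n0))) hn).
      apply nat_sum. apply NoDup_map_NoDup_ForallPairs; auto. }
  assert (A1 := H (filter (fun k => Z.leb n0 k) L)).
  assert (A2 := H (filter (fun k => negb (Z.leb n0 k)) L)).
  apply Rle_trans with (c2*(1+1/r) + c2*(1+1/r)); [apply Rplus_le_compat|lra].
  1,2: first [apply A1 | apply A2]; try (apply NoDup_filter; auto);
  intros a b Ha Hb; rewrite filter_In in Ha, Hb; destruct Ha as [_ Ha]; destruct Hb as [_ Hb].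
  - apply Z.leb_le in Ha. apply Z.leb_le in Hb. lia.
  - apply Bool.negb_true_iff, Z.leb_gt in Ha. apply Bool.negb_true_iff, Z.leb_gt in Hb. lia.
Qed.
End OneD.

Section Box.
Variable f : nat -> Z -> R.
Hypothesis fpos : forall i j, 0 <= f i j.

Fixpoint prodf (i0 : nat) (k : list Z) : R :=
  match k with [] => 1 | j :: k' => f i0 j * prodf (S i0) k' end.

Lemma prodf_pos i0 k : 0 <= prodf i0 k.
Proof. revert i0; induction k; simpl; intros; [lra|]. apply Rmult_le_pos; auto. Qed.

Definition Itv (R0 : nat) : list Z := map (fun m => (Z.of_nat m - Z.of_nat R0)%Z) (seq 0 (2 * R0 + 1)).

Fixpoint box (R0 : nat) (n : nat) : list (list Z) :=
  match n with 0 => [[]] | S n' => flat_map (fun j => map (cons j) (box R0 n')) (Itv R0) end.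

Lemma Itv_nodup R0 : NoDup (Itv R0).
Proof. apply NoDup_map_NoDup_ForallPairs; [|apply seq_NoDup]. intros a b _ _ H; lia. Qed.

Lemma Itv_in R0 j : (Z.abs j <= Z.of_nat R0)%Z -> In j (Itv R0).
Proof. intros H. unfold Itv. apply in_map_iff. exists (Z.to_nat (j + Z.of_nat R0)). split; [lia|].
  apply in_seq. lia. Qed.

Lemma box_in R0 n k : length k = n -> (forall j, In j k -> (Z.abs j <= Z.of_nat R0)%Z) -> In k (box R0 n).
Proof.
  revert k; induction n; intros k Hl Hj; destruct k as [|j k]; simpl in Hl; try lia.
  - simpl; auto.
  - simpl. apply in_flat_map. exists j. split. apply Itv_in; apply Hj; simpl; auto.
    apply in_map. apply IHn; [lia|]. intros; apply Hj; simpl; auto.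
Qed.

Lemma sl_flat {A B} (g : B -> R) (h : A -> list B) l :
  sum_list (map g (flat_map h l)) = sum_list (map (fun a => sum_list (map g (h a))) l).
Proof. induction l; simpl; [auto|]. rewrite map_app, sl_app, IHl. auto. Qed.

Lemma box_sum R0 F : 0 <= F -> (forall i, sum_list (map (f i) (Itv R0)) <= F) ->
  forall n i0, sum_list (map (prodf i0) (box R0 n)) <= F ^ n.
Proof.
  intros HF Hi. induction n; intros i0.
  - simpl. lra.
  - simpl box. rewrite sl_flat.
    rewrite (sl_ext _ (fun j => f i0 j * sum_list (map (prodf (S i0)) (box R0 n)))).
    + rewrite (sl_ext (fun j => f i0 j * _) (fun j => sum_list (map (prodf (S i0)) (box R0 n)) * f i0 j)) by (intros; ring).
      rewrite sl_scal. simpl. pose proof (IHn (S i0)). pose proof (Hi i0).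
      assert (0 <= sum_list (map (f i0) (Itv R0))) by (apply sl_nn; auto).
      assert (0 <= sum_list (map (prodf (S i0)) (box R0 n))) by (apply sl_nn; intros; apply prodf_pos).
      nra.
    + intros j _. rewrite map_map. simpl. apply sl_scal.
Qed.

Lemma bound_ex (K : list (list Z)) : exists R0 : nat, forall k, In k K -> forall j, In j k -> (Z.abs j <= Z.of_nat R0)%Z.
Proof.
  induction K as [|k K [R1 H1]].
  - exists 0%nat; simpl; tauto.
  - assert (exists R2 : nat, forall j, In j k -> (Z.abs j <= Z.of_nat R2)%Z) as [R2 H2].
    { clear. induction k as [|j k [R H]]. exists 0%nat; simpl; tauto.
      exists (R + Z.to_nat (Z.abs j))%nat. intros j' [<-|Hj]; [lia|]. specialize (H _ Hj); lia. }
    exists (R1 + R2)%nat. intros k' [<-|Hk] j Hj; [specialize (H2 _ Hj)|specialize (H1 _ Hk _ Hj)]; lia.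
Qed.

Lemma multi_sum F n (K : list (list Z)) : 0 <= F -> (forall i J, NoDup J -> sum_list (map (f i) J) <= F) ->
  NoDup K -> (forall k, In k K -> length k = n) -> sum_list (map (prodf 0) K) <= F ^ n.
Proof.
  intros HF Hi HK Hl. destruct (bound_ex K) as [R0 HR].
  apply Rle_trans with (sum_list (map (prodf 0) (box R0 n))).
  - apply sl_incl; auto. intros k Hk; apply box_in; eauto. intros; apply prodf_pos.
  - apply box_sum; auto. intros; apply Hi, Itv_nodup.
Qed.
End Box.

Lemma sl_elem {A} (f : A -> R) l a : In a l -> (forall x, In x l -> 0 <= f x) -> f a <= sum_list (map f l).
Proof.
  induction l; simpl; intros Ha Hp; [destruct Ha|].
  destruct Ha as [->|Ha].
  - assert (0 <= sum_list (map f l)) by (apply sl_nn; auto). lra.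
  - pose proof (Hp a0 (or_introl eq_refl)). pose proof (IHl Ha (fun x h => Hp x (or_intror h))). lra.
Qed.

Definition sqs (d : nat) (v : point) := sum_list (map (fun i => v i ^ 2) (seq 0 d)).

Lemma norm_sqs d v : norm d v = sqrt (sqs d v). Proof. reflexivity. Qed.

Lemma sqs_nn d v : 0 <= sqs d v.
Proof. apply sl_nn; intros; apply pow2_ge_0. Qed.

Lemma norm_nn d v : 0 <= norm d v. Proof. apply sqrt_pos. Qed.

Lemma norm_coord d v i : (i < d)%nat -> Rabs (v i) <= norm d v.
Proof.
  intros Hi. rewrite norm_sqs. rewrite <- (sqrt_pow2 (Rabs (v i))) by apply Rabs_pos.
  apply sqrt_le_1_alt. rewrite pow2_abs. unfold sqs.
  apply (sl_elem (fun i => v i ^ 2)). apply in_seq; lia. intros; apply pow2_ge_0.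
Qed.

Lemma peetre d z y : 1 + norm d z <= 2 * (1 + norm d (psub z y)) * (1 + norm d y).
Proof.
  set (a := norm d (psub z y)). set (b := norm d y).
  assert (Ha : 0 <= a) by apply norm_nn. assert (Hb : 0 <= b) by apply norm_nn.
  assert (sqs d z <= 2 * sqs d (psub z y) + 2 * sqs d y).
  { unfold sqs. rewrite <- !sl_scal, <- sl_plus. apply sl_le. intros i _. unfold psub. pose proof (pow2_ge_0 (z i - 2 * y i)). nra. }
  assert (sqs d (psub z y) = a ^ 2) by (unfold a; rewrite norm_sqs; simpl; rewrite Rmult_1_r, sqrt_sqrt; auto; apply sqs_nn).
  assert (sqs d y = b ^ 2) by (unfold b; rewrite norm_sqs; simpl; rewrite Rmult_1_r, sqrt_sqrt; auto; apply sqs_nn).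
  assert (norm d z <= 1 + 2 * a + 2 * b).
  { rewrite norm_sqs. rewrite <- (sqrt_pow2 (1 + 2*a + 2*b)) by lra. apply sqrt_le_1_alt. nra. }
  nra.
Qed.

Lemma close d v h rho : 0 <= h -> INR d * h ^ 2 <= rho ^ 2 -> 0 <= rho ->
  (forall i, (i < d)%nat -> Rabs (v i) <= h) -> norm d v <= rho.
Proof.
  intros Hh Hd Hr Hv. rewrite norm_sqs. rewrite <- (sqrt_pow2 rho) by auto. apply sqrt_le_1_alt.
  apply Rle_trans with (sum_list (map (fun _ => h ^ 2) (seq 0 d))).
  - apply sl_le. intros i Hi. apply in_seq in Hi. specialize (Hv i ltac:(lia)).
    rewrite <- pow2_abs. apply pow_incr; split; [apply Rabs_pos|auto].
  - rewrite sl_const, length_seq. auto.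
Qed.

Lemma map_eq_in {A B} (f g : A -> B) l : map f l = map g l -> forall a, In a l -> f a = g a.
Proof. induction l; simpl; intros H a0 Ha; [destruct Ha|]. injection H; intros. destruct Ha as [<-|]; auto. Qed.

Definition cz (r : R) : Z := (up r - 1)%Z.

Lemma cz_spec r : IZR (cz r) <= r < IZR (cz r) + 1.
Proof. destruct (archimed r). unfold cz. rewrite minus_IZR. simpl. lra. Qed.

Lemma cell_close h w z : 0 < h -> cz (w / h) = cz (z / h) -> Rabs (w - z) <= h.
Proof.
  intros Hh E. pose proof (cz_spec (w/h)). pose proof (cz_spec (z/h)). rewrite E in H.
  assert (Rabs (w/h - z/h) <= 1) by (apply Rabs_le; lra).
  replace (w - z) with (h * (w/h - z/h)) by (field; lra). rewrite Rabs_mult, Rabs_right by lra. nra.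
Qed.

Lemma coord_lb h x y : 0 < h ->
  Rmin 1 h * (1 + Rabs (x / h - IZR (cz (y / h)))) / 2 <= 1 + Rabs (x - y).
Proof.
  intros Hh. pose proof (cz_spec (y/h)) as Hc. set (k := IZR (cz (y/h))) in *.
  set (t := x / h) in *. set (r := y / h) in *.
  replace (x - y) with (h * (t - r)) by (unfold t, r; field; lra).
  rewrite Rabs_mult, (Rabs_right h) by lra.
  set (m := Rmin 1 h). assert (m <= 1) by apply Rmin_l. assert (m <= h) by apply Rmin_r.
  assert (0 < m) by (unfold m; apply Rmin_glb_lt; lra).
  assert (Rabs (t - r) >= Rabs (t - k) - 1).
  { pose proof (Rabs_triang (t - r) (r - k)). replace (t - r + (r - k)) with (t - k) in H2 by ring.
    assert (Rabs (r - k) <= 1) by (apply Rabs_le; lra). lra. }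
  pose proof (Rabs_pos (t - r)). pose proof (Rabs_pos (t - k)).
  destruct (Rle_dec (Rabs (t - k)) 1).
  - assert (m * (1 + Rabs (t - k)) <= 2 * m) by nra. assert (0 <= h * Rabs (t - r)) by nra. lra.
  - assert (h * Rabs (t - r) >= m * (Rabs (t - k) - 1)) by nra. nra.
Qed.

Lemma set_sum_lub S f M : sum_le S f M -> is_lub (finite_sums S f) (set_sum S f).
Proof.
  intros H. unfold set_sum. apply epsilon_spec.
  destruct (completeness (finite_sums S f)) as [m Hm].
  - exists M. intros s (l & Hn & Hl & ->). apply H; auto.
  - exists 0. exists []. simpl; repeat split; auto. constructor. tauto.
  - eauto.
Qed.

Lemma set_sum_ge S f M l : sum_le S f M -> NoDup l -> (forall y, In y l -> S y) ->
  sum_list (map f l) <= set_sum S f.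
Proof. intros H Hn Hl. apply (set_sum_lub _ _ _ H). exists l; auto. Qed.

Lemma set_sum_le S f M M' : sum_le S f M -> sum_le S f M' -> set_sum S f <= M'.
Proof. intros H H'. apply (set_sum_lub _ _ _ H). intros s (l & Hn & Hl & ->). apply H'; auto. Qed.

Lemma set_sum_nn S f M : sum_le S f M -> 0 <= set_sum S f.
Proof. intros H. apply (set_sum_ge S f M []); simpl; auto. constructor. tauto. Qed.

Lemma psub_Rd d x y : in_Rd d x -> in_Rd d y -> in_Rd d (psub x y).
Proof. intros Hx Hy i Hi. unfold psub. rewrite Hx, Hy; auto; lra. Qed.

Lemma G_shift d eps z y : 0 < INR d + eps ->
  Gfun d eps (psub z y) <= exp ((INR d + eps) * ln (2 * (1 + norm d y))) * Gfun d eps z.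
Proof.
  intros HD. unfold Gfun, Rpower. rewrite <- exp_plus. apply expl.
  pose proof (peetre d z y). pose proof (norm_nn d z). pose proof (norm_nn d y). pose proof (norm_nn d (psub z y)).
  assert (ln (1 + norm d z) <= ln (1 + norm d (psub z y)) + ln (2 * (1 + norm d y))).
  { rewrite <- ln_mult by lra. apply lnl; lra. }
  nra.
Qed.

Lemma prodf_exp (f : nat -> Z -> R) U c n i0 : (forall i j, f i j = exp (U i j)) ->
  prodf f i0 (map c (seq i0 n)) = exp (sum_list (map (fun i => U i (c i)) (seq i0 n))).
Proof.
  intros HU. revert i0; induction n; intros i0; simpl; [rewrite exp_0; auto|].
  rewrite IHn, HU, exp_plus. auto.
Qed.

Lemma count_bound alpha (n : nat) : 0 < alpha -> INR n * exp (- (alpha * (INR n - 1) / 2)) <= 1 + 2 / alpha.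
Proof.
  intros Ha. assert (0 < 2 / alpha) by (apply Rdiv_lt_0_compat; lra).
  destruct n. simpl. lra.
  rewrite exp_Ropp. pose proof (exp_ineq1_le (alpha * (INR (S n) - 1) / 2)).
  rewrite S_INR in *. pose proof (pos_INR n).
  set (Q := exp (alpha * (INR n + 1 - 1) / 2)) in *.
  assert (0 < Q) by apply exp_pos.
  apply (Rmult_le_reg_r Q); auto. rewrite Rmult_assoc, Rinv_l by lra.
  replace (INR n + 1 - 1) with (INR n) in * by ring.
  assert ((1 + 2/alpha) * (1 + alpha * INR n / 2) = 1 + 2 / alpha + alpha * INR n / 2 + INR n) by (field; lra).
  assert (0 <= alpha * INR n / 2) by (apply Rmult_le_pos; [nra|lra]).
  nra.
Qed.

Section Main.
Variables (d : nat) (eps : R) (a c phi : point -> R).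
Hypotheses (Heps : 0 < eps)
  (Ha0 : forall x, in_Rd d x -> 0 <= a x)
  (Hc0 : forall x, in_Rd d x -> 0 <= c x)
  (Hphi0 : forall x, in_Rd d x -> 0 <= phi x).
Variables (B : R).
Hypotheses (HB : 1 <= B)
  (HaG : forall x, in_Rd d x -> a x <= B * Gfun d eps x)
  (HphiG : forall x, in_Rd d x -> phi x <= B * Gfun d eps x).
Variables (alpha rho : R).
Hypotheses (Halpha : 0 < alpha) (Hrho : 0 < rho)
  (Hsep : forall x, in_Rd d x -> norm d x <= rho -> alpha <= phi x).
Variables (p : R).
Hypotheses (Hp : 0 <= p) (Hcp : forall x, in_Rd d x -> c x <= p * phi x).

Definition hh := rho / (INR d + 1).
Definition mm := Rmin 1 hh.
Definition ss := 1 + eps / (INR d + 1).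
Definition cell (y : point) : list Z := map (fun i => cz (y i / hh)) (seq 0 d).
Definition fcell (x : point) (i : nat) (j : Z) := exp (- ss * ln (mm / 2)) * gZ ss (x i / hh) j.

Lemma dpos : 0 < INR d + 1. Proof. pose proof (pos_INR d); lra. Qed.
Lemma hh_pos : 0 < hh. Proof. unfold hh; apply Rdiv_lt_0_compat; [lra|apply dpos]. Qed.
Lemma mm_pos : 0 < mm. Proof. unfold mm; apply Rmin_glb_lt; [lra|apply hh_pos]. Qed.
Lemma ss_gt1 : 1 < ss. Proof. unfold ss. pose proof dpos. assert (0 < eps / (INR d + 1)) by (apply Rdiv_lt_0_compat; lra). lra. Qed.

Lemma fcell_pos x i j : 0 <= fcell x i j.
Proof. unfold fcell, gZ. apply Rmult_le_pos; apply exp_pos'. Qed.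

Lemma Gx x y : Gfun d eps (psub x y) <= prodf (fcell x) 0 (cell y).
Proof.
  unfold cell. rewrite (prodf_exp _ (fun i j => - ss * ln (mm / 2) + - ss * ln (1 + Rabs (x i / hh - IZR j)))).
  2: { intros; unfold fcell, gZ; rewrite exp_plus; auto. }
  unfold Gfun, Rpower. apply expl.
  pose proof (norm_nn d (psub x y)). set (N := norm d (psub x y)) in *.
  assert (HL : 0 <= ln (1 + N)). { rewrite <- ln_1. apply lnl. lra. lra. }
  pose proof ss_gt1 as Hs. pose proof mm_pos. pose proof hh_pos.
  apply Rle_trans with (sum_list (map (fun _ => - ss * ln (1 + N)) (seq 0 d))).
  - rewrite sl_const, length_seq.
    assert (INR d * ss <= INR d + eps).
    { unfold ss. pose proof dpos. pose proof (pos_INR d).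
      assert (INR d * (1 + eps / (INR d + 1)) = INR d + eps * (INR d / (INR d + 1))) by (field; lra).
      assert (INR d / (INR d + 1) <= 1) by (apply (Rmult_le_reg_r (INR d + 1)); [lra|]; unfold Rdiv; rewrite Rmult_assoc, Rinv_l; lra). nra. }
    nra.
  - apply sl_le. intros i Hi. apply in_seq in Hi.
    pose proof (coord_lb hh (x i) (y i) ltac:(auto)) as HC. fold mm in HC.
    pose proof (norm_coord d (psub x y) i ltac:(lia)) as HN. unfold psub in HN at 1. fold N in HN.
    pose proof (Rabs_pos (x i / hh - IZR (cz (y i / hh)))).
    assert (ln (mm / 2) + ln (1 + Rabs (x i / hh - IZR (cz (y i / hh)))) <= ln (1 + N)).
    { rewrite <- ln_mult by lra. apply lnl. apply Rmult_lt_0_compat; lra. lra. }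
    nra.
Qed.

Definition Fb := exp (- ss * ln (mm / 2)) * (2 * (c2 ss * (1 + 1 / (ss - 1)))).
Definition Cst := 2 * (1 + p) * B.
Definition Mfin := Cst * (1 + 2 / alpha) * Fb ^ d.

Lemma Fb_pos : 0 <= Fb.
Proof. unfold Fb. pose proof ss_gt1. apply Rmult_le_pos; [apply exp_pos'|].
  assert (0 < 1 / (ss - 1)) by (apply Rdiv_lt_0_compat; lra). pose proof (exp_pos' (ss * ln 2)). unfold c2. nra. Qed.

Lemma fcell_sum x i J : NoDup J -> sum_list (map (fcell x i) J) <= Fb.
Proof. intros HJ. unfold fcell, Fb. rewrite sl_scal. apply Rmult_le_compat_l; [apply exp_pos'|].
  apply Z_sum; auto. apply ss_gt1. Qed.

Lemma cell_len y : length (cell y) = d.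
Proof. unfold cell. rewrite length_map, length_seq. auto. Qed.

Lemma same_cell_close z y : in_Rd d z -> in_Rd d y -> cell z = cell y -> alpha <= phi (psub z y).
Proof.
  intros Hz Hy E. apply Hsep. apply psub_Rd; auto.
  pose proof hh_pos. apply (close d _ hh); try lra.
  - unfold hh. pose proof dpos. pose proof (pos_INR d).
    replace ((rho / (INR d + 1)) ^ 2) with (rho ^ 2 / (INR d + 1) ^ 2) by (field; lra).
    assert (INR d / (INR d + 1) ^ 2 <= 1).
    { apply (Rmult_le_reg_r ((INR d + 1) ^ 2)); [nra|]. unfold Rdiv. rewrite Rmult_assoc, Rinv_l by nra. nra. }
    replace (INR d * (rho ^ 2 / (INR d + 1) ^ 2)) with (rho ^ 2 * (INR d / (INR d + 1) ^ 2)) by (field; lra).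
    pose proof (pow2_ge_0 rho). nra.
  - intros i Hi. unfold psub. apply cell_close; auto.
    apply (map_eq_in _ _ _ E). apply in_seq; lia.
Qed.

Definition kdec := list_eq_dec Z.eq_dec.

Lemma main_bound x eta l : in_Rd d x -> tempered d eps eta -> NoDup l -> (forall y, In y l -> eta y) ->
  sum_list (map (fun y => b_term a c phi eta x y) l) <= Mfin.
Proof.
  intros Hx [[Hpts _] [Mt HMt]] Hl Hleta.
  pose proof ss_gt1 as Hss.
  assert (HD : 0 < INR d + eps) by (pose proof (pos_INR d); lra).
  set (Sp := fun y => set_sum (fun z => eta z /\ z <> y) (fun z => phi (psub z y))).
  assert (Hbd : forall y, eta y -> sum_le (fun z => eta z /\ z <> y) (fun z => phi (psub z y))
                   (B * exp ((INR d + eps) * ln (2 * (1 + norm d y))) * Mt)).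
  { intros y Hy l' Hn' Hl'.
    set (Ky := exp ((INR d + eps) * ln (2 * (1 + norm d y)))).
    apply Rle_trans with (sum_list (map (fun z => (B * Ky) * Gfun d eps z) l')).
    - apply sl_le. intros z Hz. destruct (Hl' z Hz) as [Hz' _].
      eapply Rle_trans. apply HphiG, psub_Rd; auto.
      rewrite Rmult_assoc. apply Rmult_le_compat_l; [lra|]. apply G_shift; auto.
    - rewrite sl_scal. apply Rmult_le_compat_l. assert (0 <= Ky) by apply exp_pos'. nra.
      apply HMt; auto. intros z Hz; apply Hl'; auto. }
  set (nn := fun y => INR (length (grp kdec cell l (cell y)))).
  set (gg := fun y => Cst * prodf (fcell x) 0 (cell y) * exp (- (alpha * (nn y - 1) / 2))).
  assert (Hpt : forall y, In y l -> b_term a c phi eta x y <= gg y).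
  { intros y Hy. pose proof (Hleta y Hy) as Hey. pose proof (Hpts y Hey) as HyR.
    pose proof (Hbd y Hey) as Hb1.
    assert (HS0 : 0 <= Sp y) by (eapply set_sum_nn; eauto).
    assert (Hc : set_sum (fun z => eta z /\ z <> y) (fun z => c (psub z y)) <= p * Sp y).
    { assert (Hcl : sum_le (fun z => eta z /\ z <> y) (fun z => c (psub z y)) (p * Sp y)).
      { intros l' Hn' Hl'. apply Rle_trans with (sum_list (map (fun z => p * phi (psub z y)) l')).
        - apply sl_le. intros z Hz. apply Hcp, psub_Rd; auto. apply Hpts, Hl'; auto.
        - rewrite sl_scal. apply Rmult_le_compat_l; auto. eapply set_sum_ge; eauto. }
      eapply set_sum_le; eauto. }
    assert (Hn : alpha * (nn y - 1) <= Sp y).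
    { pose proof (grp_self kdec cell l y Hy) as Hin.
      pose proof (grp_nodup kdec cell l (cell y) Hl) as Hnd.
      destruct (in_split _ _ Hin) as (l1 & l2 & E).
      unfold nn. rewrite E. rewrite E in Hnd.
      assert (length (l1 ++ y :: l2) = S (length (l1 ++ l2))) by (rewrite !length_app; simpl; lia).
      rewrite H, S_INR. replace (INR (length (l1 ++ l2)) + 1 - 1) with (INR (length (l1 ++ l2))) by ring.
      assert (Hsub : forall z, In z (l1 ++ l2) -> In z l /\ cell z = cell y /\ z <> y).
      { intros z Hz. assert (In z (grp kdec cell l (cell y))) by (rewrite E; apply in_app_or in Hz; apply in_or_app; simpl; tauto).
        apply grp_in in H0. split; [tauto|]. split; [tauto|]. intros ->. apply (NoDup_remove_2 _ _ _ Hnd Hz). }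
      apply Rle_trans with (sum_list (map (fun z => phi (psub z y)) (l1 ++ l2))).
      - rewrite Rmult_comm, <- sl_const. apply sl_le. intros z Hz. destruct (Hsub z Hz) as (Hz1 & Hz2 & _).
        apply same_cell_close; auto.
      - eapply set_sum_ge; eauto. eapply NoDup_remove_1; eauto.
        intros z Hz. destruct (Hsub z Hz) as (Hz1 & _ & Hz3). split; auto. }
    assert (Ha : a (psub x y) <= B * prodf (fcell x) 0 (cell y)).
    { eapply Rle_trans. apply HaG, psub_Rd; auto. apply Rmult_le_compat_l; [lra|]. apply Gx. }
    assert (Ha' : 0 <= a (psub x y)) by (apply Ha0, psub_Rd; auto).
    unfold b_term, gg, Cst. fold (Sp y).
    set (E2 := exp (- (Sp y / 2))).
    assert (HE : exp (- Sp y) = E2 * E2) by (unfold E2; rewrite <- exp_plus; f_equal; lra).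
    assert (HE2 : 0 < E2) by apply exp_pos.
    assert (H1 : (1 + Sp y) * E2 <= 2).
    { pose proof (exp_ineq1_le (Sp y / 2)).
      assert (exp (Sp y / 2) * E2 = 1) by (unfold E2; rewrite <- exp_plus; replace (Sp y / 2 + - (Sp y / 2)) with 0 by ring; apply exp_0).
      nra. }
    assert (H2 : E2 <= exp (- (alpha * (nn y - 1) / 2))) by (unfold E2; apply expl; lra).
    rewrite HE.
    set (Sc := set_sum (fun z => eta z /\ z <> y) (fun z => c (psub z y))) in *.
    assert (a (psub x y) * (1 + Sc) * (E2 * E2) <= a (psub x y) * ((1 + p) * (1 + Sp y)) * (E2 * E2)).
    { apply Rmult_le_compat_r; [nra|]. apply Rmult_le_compat_l; auto. nra. }
    assert (a (psub x y) * ((1 + p) * (1 + Sp y)) * (E2 * E2) = (a (psub x y) * (1 + p)) * E2 * ((1 + Sp y) * E2)) by ring.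
    assert ((a (psub x y) * (1 + p)) * E2 * ((1 + Sp y) * E2) <= (a (psub x y) * (1 + p)) * E2 * 2).
    { apply Rmult_le_compat_l; auto. apply Rmult_le_pos; nra. }
    pose proof (prodf_pos _ (fcell_pos x) 0 (cell y)).
    assert ((a (psub x y) * (1 + p)) * E2 * 2 <= 2 * (1 + p) * B * prodf (fcell x) 0 (cell y) * exp (- (alpha * (nn y - 1) / 2))).
    { assert (0 <= a (psub x y) * (1 + p)) by nra.
      assert (a (psub x y) * (1 + p) * E2 <= (B * prodf (fcell x) 0 (cell y)) * (1 + p) * exp (- (alpha * (nn y - 1) / 2))).
      { apply Rmult_le_compat; nra. }
      nra. }
    lra. }
  apply Rle_trans with (sum_list (map gg l)); [apply sl_le; auto|].
  set (K := nodup kdec (map cell l)).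
  rewrite (sum_group kdec cell gg K l); [| apply NoDup_nodup | intros y Hy; apply nodup_In, in_map; auto].
  apply Rle_trans with (sum_list (map (fun k => (Cst * (1 + 2 / alpha)) * prodf (fcell x) 0 k) K)).
  - apply sl_le. intros k Hk.
    rewrite (sl_ext _ (fun _ => Cst * prodf (fcell x) 0 k * exp (- (alpha * (INR (length (grp kdec cell l k)) - 1) / 2)))).
    + rewrite sl_const. pose proof (count_bound alpha (length (grp kdec cell l k)) Halpha).
      pose proof (prodf_pos _ (fcell_pos x) 0 k). assert (0 <= Cst) by (unfold Cst; nra).
      set (E := exp (- (alpha * (INR (length (grp kdec cell l k)) - 1) / 2))) in *. set (n := INR (length (grp kdec cell l k))) in *. set (P := prodf (fcell x) 0 k) in *.
      replace (n * (Cst * P * E)) with ((Cst * P) * (n * E)) by ring.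
      replace (Cst * (1 + 2 / alpha) * P) with ((Cst * P) * (1 + 2 / alpha)) by ring.
      apply Rmult_le_compat_l; auto. apply Rmult_le_pos; auto.
    + intros y Hy. apply grp_in in Hy. destruct Hy as [_ <-]. auto.
  - rewrite sl_scal. unfold Mfin. apply Rmult_le_compat_l.
    + unfold Cst. assert (0 < 2 / alpha) by (apply Rdiv_lt_0_compat; lra). repeat apply Rmult_le_pos; lra.
    + apply multi_sum. apply fcell_pos. apply Fb_pos. intros; apply fcell_sum; auto.
      apply NoDup_nodup. intros k Hk. apply nodup_In, in_map_iff in Hk. destruct Hk as (y & <- & _). apply cell_len.
Qed.
End Main.

Theorem proposition3p2 (d : nat) (eps : R) (a c phi : point -> R)
  (Heps : 0 < eps)
  (Ha0 : forall x, in_Rd d x -> 0 <= a x)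
  (Hc0 : forall x, in_Rd d x -> 0 <= c x)
  (Hphi0 : forall x, in_Rd d x -> 0 <= phi x)
  (B : R) (HB : 1 <= B)
  (HaG : forall x, in_Rd d x -> a x <= B * Gfun d eps x)
  (HphiG : forall x, in_Rd d x -> phi x <= B * Gfun d eps x)
  (alpha rho : R) (Halpha : 0 < alpha) (Hrho : 0 < rho)
  (Hsep : forall x, in_Rd d x -> norm d x <= rho -> alpha <= phi x)
  (p : R) (Hp : 0 <= p)
  (Hcp : forall x, in_Rd d x -> c x <= p * phi x) :
  exists M : R, forall (x : point) (eta : point -> Prop),
    in_Rd d x -> tempered d eps eta ->
    sum_le eta (fun y => b_term a c phi eta x y) M.
Proof.
  exists (Mfin d eps B alpha rho p). intros x eta Hx Ht l Hn Hl.
  eapply main_bound; eauto.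
Qed.
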